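(* Let $G\in\mathcal{B}$ be a bounded metric space and let $r>\operatorname{diam}G$ be a real number. Then the sphere $S_r(G)=\{Y\in\mathcal{GH}: d_{GH}(G,Y)=r\}$ is path connected (it is contained in $\mathcal{B}$, and any two of its elements can be joined by a continuous curve with image in $S_r(G)$).
   Context: All metric spaces (with finite-valued metrics) are considered up to isometry. $\mathcal{GH}$ denotes the class (in the sense of von Neumann–Bernays–Gödel set theory) of representatives of isometry classes of all metric spaces, and $\mathcal{B}\subset\mathcal{GH}$ the subclass of bounded metric spaces. $d_{GH}$ is the Gromov–Hausdorff distance, with values in $[0,\infty]$: $d_{GH}(X,Y)$ is the infimum of $r$ such that there exist a metric space $Z$ and subsets $X',Y'\subset Z$ isometric to $X,Y$ with Hausdorff distance $d_H(X',Y')\le r$. Topology on the class: for each cardinal $n$, the subclass $\mathcal{GH}_n$ of spaces of cardinality at most $n$ is a set, endowed with the topology whose base consists of the open balls of $d_{GH}$. A map $f$ from a topological space $Z$ to $\mathcal{GH}$ is continuous if it is continuous as a map into $\mathcal{GH}_n$ for some (equivalently, every) cardinal $n$ with $f(Z)\subset\mathcal{GH}_n$. A continuous curve is a continuous map from a segment $[a,b]$. *)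

(* Defs.v *)
From Stdlib Require Import Reals.
Open Scope R_scope.

Record MetricSpace := {
  carrier :> Type;
  dist : carrier -> carrier -> R;
  pt : carrier;
  dist_refl : forall x, dist x x = 0;
  dist_sep : forall x y, dist x y = 0 -> x = y;
  dist_sym : forall x y, dist x y = dist y x;
  dist_tri : forall x y z, dist x z <= dist x y + dist y z
}.

Arguments dist {m} _ _.

Definition isom_embedding (X Z : MetricSpace) (f : X -> Z) : Prop :=
  forall x x', dist (f x) (f x') = dist x x'.

Definition isometric (X Y : MetricSpace) : Prop :=
  exists (f : X -> Y) (g : Y -> X),
    isom_embedding X Y f /\ (forall x, g (f x) = x) /\ (forall y, f (g y) = y).

(* Hausdorff distance between the images f(X) and g(Y) in Z is <= s
   (d_H(A,B) = max(sup_a inf_b d(a,b), sup_b inf_a d(a,b)), unfolded). *)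
Definition hausdorff_le (X Y Z : MetricSpace) (f : X -> Z) (g : Y -> Z) (s : R) : Prop :=
  (forall x, forall e, 0 < e -> exists y, dist (f x) (g y) < s + e) /\
  (forall y, forall e, 0 < e -> exists x, dist (f x) (g y) < s + e).

(* s belongs to the set whose infimum is d_GH(X,Y). *)
Definition GH_admissible (X Y : MetricSpace) (s : R) : Prop :=
  exists (Z : MetricSpace) (f : X -> Z) (g : Y -> Z),
    isom_embedding X Z f /\ isom_embedding Y Z g /\ hausdorff_le X Y Z f g s.

Definition GH_dist_eq (X Y : MetricSpace) (r : R) : Prop :=
  (forall s, GH_admissible X Y s -> r <= s) /\
  (forall m, (forall s, GH_admissible X Y s -> m <= s) -> m <= r).

Definition GH_dist_lt (X Y : MetricSpace) (e : R) : Prop :=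
  exists s, s < e /\ GH_admissible X Y s.

Definition ms_bounded (X : MetricSpace) : Prop :=
  exists C, forall x y : X, dist x y <= C.

Definition diam_lt (X : MetricSpace) (r : R) : Prop :=
  exists s, s < r /\ forall x y : X, dist x y <= s.

(* Continuity of gamma on [a,b] for the topology generated by open d_GH-balls. *)
Definition GH_continuous_on (a b : R) (gamma : R -> MetricSpace) : Prop :=
  forall t0, a <= t0 <= b -> forall eps, 0 < eps ->
    exists delta, 0 < delta /\
      forall t, a <= t <= b -> Rabs (t - t0) < delta -> GH_dist_lt (gamma t0) (gamma t) eps.

Definition in_sphere (G : MetricSpace) (r : R) (Y : MetricSpace) : Prop :=
  GH_dist_eq G Y r.

(* Main.v *)
Require Import Defs.
From Stdlib Require Import Reals Lra Classical ClassicalEpsilon.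
Import Defs.
Open Scope R_scope.

Definition lubE (E : R -> Prop) : R :=
  match excluded_middle_informative (exists m, is_lub E m) with
  | left h => proj1_sig (constructive_indefinite_description _ h)
  | right _ => 0 end.

Lemma lubE_spec E : bound E -> (exists x, E x) -> is_lub E (lubE E).
Proof.
  intros Hb Hne. unfold lubE.
  destruct (excluded_middle_informative _) as [h|h].
  - exact (proj2_sig (constructive_indefinite_description _ h)).
  - exfalso. apply h. destruct (completeness E Hb Hne) as [m Hm]. eauto.
Qed.

Definition glbE (E : R -> Prop) : R := - lubE (fun x => E (- x)).

Lemma glbE_spec E : (exists v, E v) -> (forall x, E x -> 0 <= x) ->
  is_lub (fun x => E (- x)) (lubE (fun x => E (- x))).
Proof.
  intros [v Hv] Hp. apply lubE_spec.
  - exists 0. intros x Hx. specialize (Hp _ Hx). lra.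
  - exists (- v). rewrite Ropp_involutive. exact Hv.
Qed.

Lemma glbE_le E v : E v -> (forall x, E x -> 0 <= x) -> glbE E <= v.
Proof.
  intros Hv Hp. destruct (glbE_spec E (ex_intro _ v Hv) Hp) as [H1 H2].
  unfold glbE. assert (- v <= lubE (fun x => E (- x))).
  { apply H1. rewrite Ropp_involutive. exact Hv. } lra.
Qed.

Lemma glbE_ge E m : (exists v, E v) -> (forall x, E x -> 0 <= x) ->
  (forall x, E x -> m <= x) -> m <= glbE E.
Proof.
  intros Hne Hp Hm. destruct (glbE_spec E Hne Hp) as [H1 H2].
  unfold glbE. assert (lubE (fun x => E (- x)) <= - m).
  { apply H2. intros x Hx. specialize (Hm _ Hx). lra. } lra.
Qed.

Lemma dist_nonneg (M : MetricSpace) (x y : M) : 0 <= dist x y.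
Proof.
  pose proof (dist_tri M x y x). rewrite dist_refl, (dist_sym M y x) in H. lra.
Qed.

Definition Corr (P Q : MetricSpace) (C : P -> Q -> Prop) (s : R) : Prop :=
  (forall p, exists q, C p q) /\ (forall q, exists p, C p q) /\
  (forall p q p' q', C p q -> C p' q' ->
     dist q q' <= dist p p' + 2*s /\ dist p p' <= dist q q' + 2*s).

Lemma corr_nonneg (P Q : MetricSpace) (C : P -> Q -> Prop) s : Corr P Q C s -> 0 <= s.
Proof.
  intros [H1 [H2 H3]]. destruct (H1 (pt P)) as [q Hq].
  destruct (H3 _ _ _ _ Hq Hq) as [A _]. rewrite !dist_refl in A. lra.
Qed.

Lemma corr_mono (P Q : MetricSpace) (C : P -> Q -> Prop) s s' : Corr P Q C s -> s <= s' -> Corr P Q C s'.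
Proof.
  intros [H1 [H2 H3]] Hs. split; [|split]; auto.
  intros p q p' q' Ha Hb. destruct (H3 _ _ _ _ Ha Hb). split; lra.
Qed.

Lemma corr_sym (P Q : MetricSpace) (C : P -> Q -> Prop) s : Corr P Q C s -> Corr Q P (fun q p => C p q) s.
Proof.
  intros [H1 [H2 H3]]. split; [|split]; auto.
  intros q p q' p' Ha Hb. destruct (H3 _ _ _ _ Ha Hb). split; lra.
Qed.

Lemma corr_comp (P Q W : MetricSpace) (C : P -> Q -> Prop) (D : Q -> W -> Prop) s t : Corr P Q C s -> Corr Q W D t ->
  Corr P W (fun p w => exists q, C p q /\ D q w) (s + t).
Proof.
  intros [H1 [H2 H3]] [K1 [K2 K3]]. split; [|split].
  - intros p. destruct (H1 p) as [q Hq]. destruct (K1 q) as [w Hw]. eauto.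
  - intros w. destruct (K2 w) as [q Hq]. destruct (H2 q) as [p Hp]. eauto.
  - intros p w p' w' [q [Ha Hb]] [q' [Hc Hd]].
    destruct (H3 _ _ _ _ Ha Hc). destruct (K3 _ _ _ _ Hb Hd). split; lra.
Qed.

Lemma corr_refl (P : MetricSpace) : Corr P P eq 0.
Proof.
  split; [|split]; eauto. intros p q p' q' <- <-. split; lra.
Qed.

Definition hglue (P Q : MetricSpace) (C : P -> Q -> Prop) (p : P) (q : Q) : R :=
  glbE (fun v => exists p1 q1, C p1 q1 /\ v = dist p p1 + dist q1 q).

Definition gdist (P Q : MetricSpace) (C : P -> Q -> Prop) (s : R) (u v : P + Q) : R :=
  match u, v with
  | inl p, inl p' => dist p p'
  | inr q, inr q' => dist q q'
  | inl p, inr q => s + hglue P Q C p q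
  | inr q, inl p => s + hglue P Q C p q
  end.


Lemma hglue_nonneg (P Q : MetricSpace) (C : P -> Q -> Prop) (p : P) (q : Q) : (forall p, exists q, C p q) -> 0 <= hglue P Q C p q.
Proof.
  intros Ht. unfold hglue. apply glbE_ge.
  - destruct (Ht p) as [q1 H1]. exists (dist p p + dist q1 q). eauto.
  - intros x [p1 [q1 [_ ->]]]. pose proof (dist_nonneg P p p1). pose proof (dist_nonneg Q q1 q). lra.
  - intros x [p1 [q1 [_ ->]]]. pose proof (dist_nonneg P p p1). pose proof (dist_nonneg Q q1 q). lra.
Qed.

Lemma hglue_le (P Q : MetricSpace) (C : P -> Q -> Prop) (p : P) (q : Q) (p1 : P) (q1 : Q) : C p1 q1 ->
  hglue P Q C p q <= dist p p1 + dist q1 q.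
Proof.
  intros Hc. unfold hglue. apply glbE_le.
  - eauto.
  - intros x [p2 [q2 [_ ->]]]. pose proof (dist_nonneg P p p2). pose proof (dist_nonneg Q q2 q). lra.
Qed.

Lemma hglue_A (P Q : MetricSpace) (C : P -> Q -> Prop) (p p' : P) (q : Q) : (forall p, exists q, C p q) ->
  hglue P Q C p q <= dist p p' + hglue P Q C p' q.
Proof.
  intros Ht.
  assert (hglue P Q C p q - dist p p' <= hglue P Q C p' q); [|lra].
  unfold hglue at 2. apply glbE_ge.
  - destruct (Ht p') as [q1 H1]. exists (dist p' p' + dist q1 q). eauto.
  - intros x [p2 [q2 [_ ->]]]. pose proof (dist_nonneg P p' p2). pose proof (dist_nonneg Q q2 q). lra.
  - intros x [p1 [q1 [Hc ->]]]. pose proof (hglue_le P Q C p q p1 q1 Hc).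
    pose proof (dist_tri P p p' p1). lra.
Qed.

Lemma hglue_B (P Q : MetricSpace) (C : P -> Q -> Prop) (p : P) (q q' : Q) : (forall p, exists q, C p q) ->
  hglue P Q C p q <= hglue P Q C p q' + dist q' q.
Proof.
  intros Ht.
  assert (hglue P Q C p q - dist q' q <= hglue P Q C p q'); [|lra].
  unfold hglue at 2. apply glbE_ge.
  - destruct (Ht p) as [q1 H1]. exists (dist p p + dist q1 q'). eauto.
  - intros x [p2 [q2 [_ ->]]]. pose proof (dist_nonneg P p p2). pose proof (dist_nonneg Q q2 q'). lra.
  - intros x [p1 [q1 [Hc ->]]]. pose proof (hglue_le P Q C p q p1 q1 Hc).
    pose proof (dist_tri Q q1 q' q). lra.
Qed.

Lemma hglue_C (P Q : MetricSpace) (C : P -> Q -> Prop) s0 s (p p' : P) (q : Q) : Corr P Q C s0 -> s0 <= s ->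
  dist p p' <= 2 * s + hglue P Q C p q + hglue P Q C p' q.
Proof.
  intros HC Hs. pose proof HC as [Ht [Ht2 H3]].
  assert (dist p p' - 2 * s - hglue P Q C p q <= hglue P Q C p' q); [|lra].
  unfold hglue at 2. apply glbE_ge.
  - destruct (Ht p') as [q1 H1]. exists (dist p' p' + dist q1 q). eauto.
  - intros x [p2 [q2 [_ ->]]]. pose proof (dist_nonneg P p' p2). pose proof (dist_nonneg Q q2 q). lra.
  - intros x [p2 [q2 [Hc2 ->]]].
    assert (dist p p' - 2 * s - (dist p' p2 + dist q2 q) <= hglue P Q C p q); [|lra].
    unfold hglue. apply glbE_ge.
    + destruct (Ht p) as [q1 H1]. exists (dist p p + dist q1 q). eauto.
    + intros x [p3 [q3 [_ ->]]]. pose proof (dist_nonneg P p p3). pose proof (dist_nonneg Q q3 q). lra.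
    + intros x [p1 [q1 [Hc1 ->]]].
      destruct (H3 _ _ _ _ Hc1 Hc2) as [_ E].
      pose proof (dist_tri P p p1 p'). pose proof (dist_tri P p1 p2 p').
      pose proof (dist_tri Q q1 q q2). rewrite (dist_sym Q q q2) in H1.
      rewrite (dist_sym P p2 p') in H0. lra.
Qed.

Lemma hglue_D (P Q : MetricSpace) (C : P -> Q -> Prop) s0 s (p : P) (q q' : Q) : Corr P Q C s0 -> s0 <= s ->
  dist q q' <= 2 * s + hglue P Q C p q + hglue P Q C p q'.
Proof.
  intros HC Hs. pose proof HC as [Ht [Ht2 H3]].
  assert (dist q q' - 2 * s - hglue P Q C p q <= hglue P Q C p q'); [|lra].
  unfold hglue at 2. apply glbE_ge.
  - destruct (Ht p) as [q1 H1]. exists (dist p p + dist q1 q'). eauto.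
  - intros x [p2 [q2 [_ ->]]]. pose proof (dist_nonneg P p p2). pose proof (dist_nonneg Q q2 q'). lra.
  - intros x [p2 [q2 [Hc2 ->]]].
    assert (dist q q' - 2 * s - (dist p p2 + dist q2 q') <= hglue P Q C p q); [|lra].
    unfold hglue. apply glbE_ge.
    + destruct (Ht p) as [q1 H1]. exists (dist p p + dist q1 q). eauto.
    + intros x [p3 [q3 [_ ->]]]. pose proof (dist_nonneg P p p3). pose proof (dist_nonneg Q q3 q). lra.
    + intros x [p1 [q1 [Hc1 ->]]].
      destruct (H3 _ _ _ _ Hc1 Hc2) as [E _].
      pose proof (dist_tri Q q q1 q'). pose proof (dist_tri Q q1 q2 q').
      pose proof (dist_tri P p1 p p2). rewrite (dist_sym P p1 p) in H1.
      rewrite (dist_sym Q q q1) in H. lra.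
Qed.

Lemma gdist_refl (P Q : MetricSpace) (C : P -> Q -> Prop) s x : gdist P Q C s x x = 0.
Proof. destruct x; simpl; apply dist_refl. Qed.

Lemma gdist_sym (P Q : MetricSpace) (C : P -> Q -> Prop) s x y : gdist P Q C s x y = gdist P Q C s y x.
Proof. destruct x, y; simpl; auto using dist_sym. Qed.

Lemma gdist_sep (P Q : MetricSpace) (C : P -> Q -> Prop) s0 s x y : Corr P Q C s0 -> s0 < s ->
  gdist P Q C s x y = 0 -> x = y.
Proof.
  intros HC Hs. pose proof (corr_nonneg _ _ _ _ HC). destruct HC as [Ht _].
  destruct x as [p|q], y as [p'|q']; simpl; intros E.
  - f_equal. now apply dist_sep.
  - pose proof (hglue_nonneg P Q C p q' Ht). lra.
  - pose proof (hglue_nonneg P Q C p' q Ht). lra.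
  - f_equal. now apply dist_sep.
Qed.

Lemma gdist_tri (P Q : MetricSpace) (C : P -> Q -> Prop) s0 s x y z : Corr P Q C s0 -> s0 < s ->
  gdist P Q C s x z <= gdist P Q C s x y + gdist P Q C s y z.
Proof.
  intros HC Hs. pose proof HC as [Ht _].
  destruct x as [p|q], y as [p'|q'], z as [p''|q'']; simpl.
  - apply dist_tri.
  - pose proof (hglue_A P Q C p p' q'' Ht). lra.
  - pose proof (hglue_C P Q C s0 s p p'' q' HC (Rlt_le _ _ Hs)). lra.
  - pose proof (hglue_B P Q C p q'' q' Ht). lra.
  - pose proof (hglue_A P Q C p'' p' q Ht). rewrite (dist_sym P p'' p') in H. lra.
  - pose proof (hglue_D P Q C s0 s p' q q'' HC (Rlt_le _ _ Hs)). lra.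
  - pose proof (hglue_B P Q C p'' q q' Ht). rewrite (dist_sym Q q' q) in H. lra.
  - apply dist_tri.
Qed.

Definition glue (P Q : MetricSpace) (C : P -> Q -> Prop) s0 s (HC : Corr P Q C s0) (Hs : s0 < s) : MetricSpace :=
  {| carrier := (P + Q)%type;
     dist := gdist P Q C s;
     pt := inl (pt P);
     dist_refl := gdist_refl P Q C s;
     dist_sep := fun x y => gdist_sep P Q C s0 s x y HC Hs;
     dist_sym := gdist_sym P Q C s;
     dist_tri := fun x y z => gdist_tri P Q C s0 s x y z HC Hs |}.

Lemma corr_adm (P Q : MetricSpace) (C : P -> Q -> Prop) s0 s : Corr P Q C s0 -> s0 < s -> GH_admissible P Q s.
Proof.
  intros HC Hs. pose proof (corr_nonneg _ _ _ _ HC) as H0.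
  exists (glue P Q C s0 s HC Hs), inl, inr.
  split; [|split].
  - intros x x'. reflexivity.
  - intros x x'. reflexivity.
  - destruct HC as [H1 [H2 H3]]. split.
    + intros p e He. destruct (H1 p) as [q Hq]. exists q. simpl.
      pose proof (hglue_le P Q C p q p q Hq). rewrite !dist_refl in H. lra.
    + intros q e He. destruct (H2 q) as [p Hp]. exists p. simpl.
      pose proof (hglue_le P Q C p q p q Hp). rewrite !dist_refl in H. lra.
Qed.

Lemma adm_corr (P Q : MetricSpace) s e : GH_admissible P Q s -> 0 < e ->
  exists C, Corr P Q C (s + e).
Proof.
  intros [Z [f [g [Hf [Hg [Hh1 Hh2]]]]]] He.
  exists (fun p q => dist (f p) (g q) < s + e). split; [|split].
  - intros p. destruct (Hh1 p e He) as [q Hq]. eauto.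
  - intros q. destruct (Hh2 q e He) as [p Hp]. eauto.
  - intros p q p' q' Ha Hb. rewrite <- (Hf p p'), <- (Hg q q'). split.
    + pose proof (dist_tri Z (g q) (f p) (g q')).
      pose proof (dist_tri Z (f p) (f p') (g q')).
      rewrite (dist_sym Z (g q) (f p)) in H. lra.
    + pose proof (dist_tri Z (f p) (g q) (f p')).
      pose proof (dist_tri Z (g q) (g q') (f p')).
      rewrite (dist_sym Z (g q') (f p')) in H0. lra.
Qed.
Definition below (G : MetricSpace) (r : R) (M : MetricSpace) : Prop :=
  exists (C : G -> M -> Prop) s, s < r /\ Corr G M C s.
Definition near (G : MetricSpace) (r : R) (M : MetricSpace) : Prop :=
  forall s, r < s -> exists C : G -> M -> Prop, Corr G M C s.

Lemma sphere_to G r M : in_sphere G r M -> ~ below G r M /\ near G r M.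
Proof.
  intros [H1 H2]. split.
  - intros [C [s [Hs HC]]].
    pose proof (H1 _ (corr_adm _ _ _ s ((s + r)/2) HC ltac:(lra))). lra.
  - intros s Hs.
    destruct (classic (exists s1, s1 < s /\ GH_admissible G M s1)) as [[s1 [Hs1 Ha]]|Hn].
    + destruct (adm_corr _ _ _ ((s - s1)/2) Ha ltac:(lra)) as [C HC].
      exists C. apply (corr_mono _ _ _ _ _ HC). lra.
    + exfalso. assert (s <= r); [|lra]. apply H2. intros s1 Ha.
      destruct (Rle_or_lt s s1); auto. exfalso; eauto.
Qed.

Lemma sphere_of G r M : ~ below G r M -> near G r M -> in_sphere G r M.
Proof.
  intros Hb Hn. split.
  - intros s Ha. destruct (Rle_or_lt r s) as [h|h]; auto. exfalso.
    destruct (adm_corr _ _ _ ((r - s)/2) Ha ltac:(lra)) as [C HC].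
    apply Hb. exists C, (s + (r - s)/2). split; auto. lra.
  - intros m Hm. destruct (Rle_or_lt m r) as [h|h]; auto. exfalso.
    destruct (Hn ((m + r)/2) ltac:(lra)) as [C HC].
    pose proof (Hm _ (corr_adm _ _ _ _ (m - (m - r)/4) HC ltac:(lra))). lra.
Qed.

Lemma sphere_corr0 G r (P Q : MetricSpace) (C : P -> Q -> Prop) :
  Corr P Q C 0 -> in_sphere G r P -> in_sphere G r Q.
Proof.
  intros HC HP. apply sphere_to in HP as [Hb Hn]. apply sphere_of.
  - intros [D [s [Hs HD]]]. apply Hb.
    exists (fun g p => exists q, D g q /\ C p q), (s + 0). split; [lra|].
    apply corr_comp; auto. apply corr_sym; auto.
  - intros s Hs. destruct (Hn s Hs) as [D HD].
    exists (fun g q => exists p, D g p /\ C p q).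
    replace s with (s + 0) by lra. apply corr_comp; auto.
Qed.

Definition posr (k : R) : R := if Rlt_dec 0 k then k else 1.
Lemma posr_pos k : 0 < posr k.
Proof. unfold posr. destruct (Rlt_dec 0 k); lra. Qed.
Lemma posr_eq k : 0 < k -> posr k = k.
Proof. unfold posr. destruct (Rlt_dec 0 k); lra. Qed.

Lemma sc_refl (M : MetricSpace) k (x : M) : posr k * dist x x = 0.
Proof. rewrite dist_refl; ring. Qed.
Lemma sc_sep (M : MetricSpace) k (x y : M) : posr k * dist x y = 0 -> x = y.
Proof.
  intros E. apply dist_sep. pose proof (posr_pos k).
  destruct (Rmult_integral _ _ E); auto; lra.
Qed.
Lemma sc_sym (M : MetricSpace) k (x y : M) : posr k * dist x y = posr k * dist y x.
Proof. rewrite dist_sym; auto. Qed.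
Lemma sc_tri (M : MetricSpace) k (x y z : M) :
  posr k * dist x z <= posr k * dist x y + posr k * dist y z.
Proof.
  pose proof (posr_pos k). pose proof (dist_tri M x y z).
  rewrite <- Rmult_plus_distr_l. apply Rmult_le_compat_l; lra.
Qed.

Definition scale (k : R) (M : MetricSpace) : MetricSpace :=
  {| carrier := M; dist := fun x y => posr k * dist x y; pt := pt M;
     dist_refl := sc_refl M k; dist_sep := sc_sep M k; dist_sym := sc_sym M k;
     dist_tri := sc_tri M k |}.

Lemma scale_dist k (M : MetricSpace) (x y : M) : 0 < k ->
  @dist (scale k M) x y = k * dist x y.
Proof. intros h. simpl. rewrite posr_eq; auto. Qed.

Lemma corr_scale_down (G M : MetricSpace) (C : G -> M -> Prop) s0 l m s s' :
  (forall g g' : G, dist g g' <= s0) -> 0 < m -> m <= l ->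
  Corr G (scale l M) C s -> m * s <= l * s' -> s0 <= 2 * s' ->
  Corr G (scale m M) C s'.
Proof.
  intros Hs0 Hm Hml HC Hk Hs'. pose proof (corr_nonneg _ _ _ _ HC) as Hsn.
  destruct HC as [H1 [H2 H3]]. split; [|split]; auto.
  intros g x g' x' Ha Hb. destruct (H3 _ _ _ _ Ha Hb) as [E1 E2].
  rewrite scale_dist in E1, E2 |- * by lra.
  pose proof (dist_nonneg M x x'). pose proof (dist_nonneg G g g').
  pose proof (Hs0 g g'). split; [|nra].
  apply (Rmult_le_reg_l l); [lra|].
  assert (l * (m * @dist M x x') = m * (l * @dist M x x')) by ring.
  assert (m * (l * @dist M x x') <= m * (dist g g' + 2 * s)) by (apply Rmult_le_compat_l; lra).
  assert (m * dist g g' <= l * dist g g') by (apply Rmult_le_compat_r; lra).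
  lra.
Qed.

Lemma corr_scale (P Q : MetricSpace) (C : P -> Q -> Prop) s D l m d' :
  Corr P Q C s -> (forall x y : P, dist x y <= D) -> (forall x y : Q, dist x y <= D) ->
  0 < l -> 0 < m -> Rabs (l - m) * D + 2 * Rmax l m * s <= 2 * d' ->
  Corr (scale l P) (scale m Q) C d'.
Proof.
  intros HC HDP HDQ Hl Hm Hd. pose proof (corr_nonneg _ _ _ _ HC) as Hsn.
  destruct HC as [H1 [H2 H3]]. split; [|split]; auto.
  intros p q p' q' Ha Hb. destruct (H3 _ _ _ _ Ha Hb) as [E1 E2].
  rewrite !scale_dist by lra.
  pose proof (dist_nonneg P p p'). pose proof (dist_nonneg Q q q').
  pose proof (HDP p p'). pose proof (HDQ q q').
  pose proof (Rmax_l l m). pose proof (Rmax_r l m).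
  pose proof (Rle_abs (l - m)). pose proof (Rabs_minus_sym l m). pose proof (Rle_abs (m - l)).
  split.
  - assert (m * @dist Q q q' <= m * (@dist P p p' + 2 * s)) by (apply Rmult_le_compat_l; lra).
    assert ((m - l) * @dist P p p' <= Rabs (l - m) * D) by nra.
    assert (m * s <= Rmax l m * s) by nra. nra.
  - assert (l * @dist P p p' <= l * (@dist Q q q' + 2 * s)) by (apply Rmult_le_compat_l; lra).
    assert ((l - m) * @dist Q q q' <= Rabs (l - m) * D) by nra.
    assert (l * s <= Rmax l m * s) by nra. nra.
Qed.
Lemma corr_rescale (M : MetricSpace) D l1 l2 :
  (forall x y : M, dist x y <= D) -> 0 < l1 -> 0 < l2 ->
  Corr (scale l1 M) (scale l2 M) eq (Rabs (l1 - l2) * D / 2).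
Proof.
  intros HD H1 H2. apply (corr_scale M M eq 0 D); auto using corr_refl. lra.
Qed.

Lemma lub_sphere (G : MetricSpace) r s0 (M : MetricSpace) D lmin lmax :
  (forall g g' : G, dist g g' <= s0) -> s0 < r ->
  0 <= D -> (forall x y : M, dist x y <= D) -> 0 < lmin -> lmin <= lmax ->
  below G r (scale lmin M) -> ~ below G r (scale lmax M) ->
  let S := fun x => lmin <= x <= lmax /\ below G r (scale x M) in
  is_lub S (lubE S) /\ lmin <= lubE S <= lmax /\ in_sphere G r (scale (lubE S) M).
Proof.
  intros Hs0 Hr HD0 HD Hmin Hle Hbmin Hbmax S.
  assert (Hl : is_lub S (lubE S)).
  { apply lubE_spec. exists lmax. intros x [Hx _]. lra. exists lmin. split; auto. lra. }
  set (l := lubE S) in *. destruct Hl as [Hub Hleast].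
  assert (Hl1 : lmin <= l). { apply Hub. split; auto. lra. }
  assert (Hl2 : l <= lmax). { apply Hleast. intros x [Hx _]. lra. }
  split; [split; auto|split; [lra|]].
  apply sphere_of.
  - intros [C [s [Hs HC]]].
    assert (Hlt : l < lmax).
    { destruct (Rle_lt_or_eq_dec _ _ Hl2) as [h|h]; auto. subst l. exfalso. apply Hbmax.
      rewrite <- h. exists C, s. auto. }
    set (eta := Rmin (lmax - l) ((r - s)/(D+1))).
    assert (He1 : 0 < eta). { unfold eta. apply Rmin_pos; [lra|]. apply Rdiv_lt_0_compat; lra. }
    assert (He2 : eta <= lmax - l) by apply Rmin_l.
    assert (He3 : eta <= (r - s)/(D+1)) by apply Rmin_r.
    assert (He4 : eta * D < r - s).
    { assert (eta * (D+1) <= r - s).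
      { apply (Rmult_le_compat_r (D+1)) in He3; [|lra].
        unfold Rdiv in He3. rewrite Rmult_assoc, Rinv_l in He3; lra. }
      nra. }
    pose proof (corr_rescale M D l (l + eta) HD ltac:(lra) ltac:(lra)) as HR.
    replace (l - (l + eta)) with (- eta) in HR by ring.
    rewrite Rabs_Ropp, Rabs_pos_eq in HR by lra.
    pose proof (corr_comp _ _ _ _ _ _ _ HC HR) as HC2.
    assert (S (l + eta)).
    { split; [lra|]. eexists. exists (s + eta * D / 2). split; [|exact HC2]. lra. }
    pose proof (Hub _ H). lra.
  - intros sg Hsg.
    set (eps := (sg - r)/(D+1)).
    assert (Hep : 0 < eps) by (apply Rdiv_lt_0_compat; lra).
    assert (HepD : eps * D < sg - r).
    { assert (eps * (D+1) = sg - r) by (unfold eps; field; lra). nra. }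
    destruct (classic (exists x, S x /\ l - eps < x)) as [[x [[Hx1 [C [s1 [Hs1 HC]]]] Hx2]]|Hn].
    + assert (x <= l) by (apply Hub; split; auto; exists C, s1; auto).
      pose proof (corr_rescale M D x l HD ltac:(lra) ltac:(lra)) as HR.
      rewrite Rabs_minus_sym, Rabs_pos_eq in HR by lra.
      pose proof (corr_comp _ _ _ _ _ _ _ HC HR) as HC2.
      eexists. apply (corr_mono _ _ _ _ _ HC2).
      assert ((l - x) * D <= eps * D) by (apply Rmult_le_compat_r; lra). lra.
    + exfalso. assert (l <= l - eps); [|lra]. apply Hleast. intros x Hx.
      destruct (Rle_or_lt x (l - eps)); auto. exfalso. eauto.
Qed.

Lemma sphere_scale_unique (G : MetricSpace) r s0 (M : MetricSpace) l m :
  (forall g g' : G, dist g g' <= s0) -> s0 < r -> 0 < l -> 0 < m ->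
  in_sphere G r (scale l M) -> in_sphere G r (scale m M) -> l = m.
Proof.
  intros Hs0 Hr Hl Hm.
  assert (Hs00 : 0 <= s0) by (pose proof (Hs0 (pt G) (pt G)); rewrite dist_refl in H; lra).
  assert (W : forall a b, 0 < a -> 0 < b -> a < b ->
     in_sphere G r (scale b M) -> in_sphere G r (scale a M) -> False).
  { intros a b Ha Hb Hab HB HA. apply sphere_to in HB as [_ Hn]. apply sphere_to in HA as [Hbl _].
    set (sg := r * (a + b) / (2 * a)).
    assert (Hsg : r < sg). { unfold sg. apply (Rmult_lt_reg_l (2 * a)); [lra|].
      field_simplify; [nra|lra]. }
    destruct (Hn sg Hsg) as [C HC]. apply Hbl.
    set (s' := Rmax (r * (a + b) / (2 * b)) (s0 / 2)).
    exists C, s'. split.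
    - unfold s'. apply Rmax_lub_lt; [|lra].
      apply (Rmult_lt_reg_l (2 * b)); [lra|]. field_simplify; nra.
    - apply (corr_scale_down G M C s0 b a sg s'); auto; try lra.
      + unfold sg. assert (r * (a + b) / (2 * b) <= s') by apply Rmax_l.
        apply (Rmult_le_compat_l b) in H; [|lra].
        replace (b * (r * (a + b) / (2 * b))) with (r * (a + b) / 2) in H by (field; lra).
        replace (a * (r * (a + b) / (2 * a))) with (r * (a + b) / 2) by (field; lra). lra.
      + assert (s0 / 2 <= s') by apply Rmax_r. lra. }
  intros H1 H2. destruct (Rtotal_order l m) as [h|[h|h]]; auto; exfalso; eauto.
Qed.
Lemma corr_same_scale (P Q : MetricSpace) (C : P -> Q -> Prop) s D n :
  Corr P Q C s -> (forall x y : P, dist x y <= D) -> (forall x y : Q, dist x y <= D) ->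
  0 < n -> Corr (scale n P) (scale n Q) C (n * s).
Proof.
  intros HC HP HQ Hn. pose proof (corr_nonneg _ _ _ _ HC).
  apply (corr_scale P Q C s D); auto.
  replace (n - n) with 0 by ring. rewrite Rabs_R0.
  replace (Rmax n n) with n by (unfold Rmax; destruct (Rle_dec n n); lra). lra.
Qed.

Definition lamf (G : MetricSpace) r (W : R -> MetricSpace) lmin lmax t :=
  lubE (fun x => lmin <= x <= lmax /\ below G r (scale x (W t))).

Lemma lam_cont (G : MetricSpace) r s0 (W : R -> MetricSpace) D K lmin lmax :
  (forall g g' : G, dist g g' <= s0) -> s0 < r -> 0 <= D -> 0 <= K ->
  (forall t, 0 <= t <= 2 -> forall x y : W t, dist x y <= D) ->
  (forall t t', 0 <= t <= 2 -> 0 <= t' <= 2 ->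
     exists C, Corr (W t) (W t') C (K * Rabs (t - t'))) ->
  0 < lmin -> lmin <= lmax ->
  (forall t, 0 <= t <= 2 -> below G r (scale lmin (W t))) ->
  (forall t, 0 <= t <= 2 -> ~ below G r (scale lmax (W t))) ->
  forall t0, 0 <= t0 <= 2 -> forall eps, 0 < eps -> exists delta, 0 < delta /\
    forall t, 0 <= t <= 2 -> Rabs (t - t0) < delta ->
      Rabs (lamf G r W lmin lmax t - lamf G r W lmin lmax t0) < eps.
Proof.
  intros Hs0 Hr HD0 HK0 HD HK Hmin Hle Hbmin Hbmax t0 Ht0 eps Heps.
  assert (Hs00 : 0 <= s0) by (pose proof (Hs0 (pt G) (pt G)); rewrite dist_refl in H; lra).
  pose proof (lub_sphere G r s0 (W t0) D lmin lmax Hs0 Hr HD0 (HD t0 Ht0) Hmin Hle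
     (Hbmin t0 Ht0) (Hbmax t0 Ht0)) as [[Hub0 Hleast0] [Hb0 Hsp0]].
  fold (lamf G r W lmin lmax t0) in *.
  set (l0 := lamf G r W lmin lmax t0) in *.
  apply sphere_to in Hsp0 as [Hnb0 Hnear0].
  set (e' := eps / 2).
  assert (He' : 0 < e') by (unfold e'; lra).
  set (n := l0 + e').
  set (db := e' * r / (l0 * n * K + 1)).
  assert (Hdb : 0 < db).
  { unfold db. apply Rdiv_lt_0_compat; [nra|]. assert (0 <= l0 * n * K).
    { apply Rmult_le_pos; [|lra]. apply Rmult_le_pos; unfold n; lra. } lra. }
  assert (Hdb2 : l0 * n * K * db < e' * r).
  { unfold db. assert (0 <= l0 * n * K).
    { apply Rmult_le_pos; [|lra]. apply Rmult_le_pos; unfold n; lra. }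
    apply (Rmult_lt_reg_r (l0 * n * K + 1)); [lra|].
    field_simplify; [|lra]. nra. }
  assert (StepB : forall t, 0 <= t <= 2 -> Rabs (t - t0) < db ->
     lamf G r W lmin lmax t <= n).
  { intros t Ht Hdt.
    pose proof (lub_sphere G r s0 (W t) D lmin lmax Hs0 Hr HD0 (HD t Ht) Hmin Hle
       (Hbmin t Ht) (Hbmax t Ht)) as [[Hub Hleast] _].
    apply Hleast. intros x [Hx [C [s2 [Hs2 HC]]]].
    destruct (Rle_or_lt x n) as [h|h]; auto. exfalso.
    pose proof (corr_nonneg _ _ _ _ HC).
    assert (HC1 : Corr G (scale n (W t)) C (Rmax s2 (s0 / 2))).
    { apply (corr_scale_down G (W t) C s0 x n s2); auto; try lra; try (unfold n in *; lra).
      - pose proof (Rmax_l s2 (s0/2)). assert (0 < n) by (unfold n; lra).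
        assert (n * s2 <= x * s2) by (apply Rmult_le_compat_r; lra).
        assert (x * s2 <= x * Rmax s2 (s0/2)) by (apply Rmult_le_compat_l; lra). lra.
      - pose proof (Rmax_r s2 (s0/2)). lra. }
    destruct (HK t t0 Ht Ht0) as [C1 HC1'].
    pose proof (corr_same_scale _ _ _ _ D n HC1' (HD t Ht) (HD t0 Ht0) ltac:(unfold n; lra)) as HC2.
    pose proof (corr_comp _ _ _ _ _ _ _ HC1 HC2) as HC3.
    set (s3 := Rmax s2 (s0 / 2) + n * (K * Rabs (t - t0))) in *.
    apply Hnb0. exists (fun g w => exists q, C g q /\ C1 q w).
    exists (Rmax (l0 * s3 / n) (s0 / 2)). split.
    - apply Rmax_lub_lt; [|lra].
      assert (Hs2' : Rmax s2 (s0/2) < r) by (apply Rmax_lub_lt; lra).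
      assert (n * (K * Rabs (t - t0)) * l0 <= l0 * n * K * db).
      { assert (0 <= Rabs (t - t0)) by apply Rabs_pos.
        assert (0 <= l0 * n * K) by (apply Rmult_le_pos; [apply Rmult_le_pos|]; unfold n; lra).
        assert (l0 * n * K * Rabs (t - t0) <= l0 * n * K * db) by (apply Rmult_le_compat_l; lra).
        nra. }
      apply (Rmult_lt_reg_r n); [unfold n; lra|].
      replace (l0 * s3 / n * n) with (l0 * s3) by (field; unfold n; lra).
      unfold s3. assert (l0 * Rmax s2 (s0/2) < l0 * r) by (apply Rmult_lt_compat_l; lra).
      assert (r * n = r * l0 + e' * r) by (unfold n; ring). nra.
    - apply (corr_scale_down G (W t0) _ s0 n l0 s3); auto; try lra; try (unfold n in *; lra).
      + pose proof (Rmax_l (l0 * s3 / n) (s0/2)).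
        apply (Rmult_le_compat_l n) in H0; [|unfold n; lra].
        replace (n * (l0 * s3 / n)) with (l0 * s3) in H0 by (field; unfold n; lra). lra.
      + pose proof (Rmax_r (l0 * s3 / n) (s0/2)). lra. }
  set (m := l0 - e').
  destruct (Rle_or_lt m lmin) as [Hml|Hml].
  - exists db. split; auto. intros t Ht Hdt.
    pose proof (StepB t Ht Hdt).
    pose proof (lub_sphere G r s0 (W t) D lmin lmax Hs0 Hr HD0 (HD t Ht) Hmin Hle
       (Hbmin t Ht) (Hbmax t Ht)) as [_ [[Hb1 Hb2] _]].
    unfold lamf in *. apply Rabs_def1; unfold n, m, e' in *; lra.
  - set (sg := r * (l0 + m) / (2 * m)).
    assert (Hsg : r < sg). { unfold sg. apply (Rmult_lt_reg_l (2 * m)); [lra|].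
      field_simplify; [unfold m; nra|lra]. }
    destruct (Hnear0 sg Hsg) as [C0 HC0].
    set (s1 := Rmax (r * (l0 + m) / (2 * l0)) (s0 / 2)).
    assert (Hs1 : s1 < r).
    { unfold s1. apply Rmax_lub_lt; [|lra].
      apply (Rmult_lt_reg_l (2 * l0)); [lra|]. field_simplify; [unfold m; nra|lra]. }
    assert (HC1 : Corr G (scale m (W t0)) C0 s1).
    { apply (corr_scale_down G (W t0) C0 s0 l0 m sg); auto; try lra; try (unfold m in *; lra).
      - unfold sg. assert (r * (l0 + m) / (2 * l0) <= s1) by apply Rmax_l.
        apply (Rmult_le_compat_l l0) in H; [|lra].
        replace (l0 * (r * (l0 + m) / (2 * l0))) with (r * (l0 + m) / 2) in H by (field; lra).
        replace (m * (r * (l0 + m) / (2 * m))) with (r * (l0 + m) / 2) by (field; lra). lra.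
      - assert (s0 / 2 <= s1) by apply Rmax_r. lra. }
    set (da := (r - s1) / (m * K + 1)).
    assert (Hda : 0 < da) by (unfold da; apply Rdiv_lt_0_compat; nra).
    assert (Hda2 : m * K * da < r - s1).
    { unfold da. apply (Rmult_lt_reg_r (m * K + 1)); [nra|]. field_simplify; nra. }
    exists (Rmin da db). split; [apply Rmin_pos; auto|].
    intros t Ht Hdt.
    assert (Hdt1 : Rabs (t - t0) < da) by (pose proof (Rmin_l da db); lra).
    assert (Hdt2 : Rabs (t - t0) < db) by (pose proof (Rmin_r da db); lra).
    pose proof (StepB t Ht Hdt2).
    pose proof (lub_sphere G r s0 (W t) D lmin lmax Hs0 Hr HD0 (HD t Ht) Hmin Hle
       (Hbmin t Ht) (Hbmax t Ht)) as [[Hub Hleast] [[Hb1 Hb2] _]].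
    unfold lamf in *.
    assert (m <= lamf G r W lmin lmax t).
    { apply Hub. split; [unfold m in *; lra|].
      destruct (HK t0 t Ht0 Ht) as [C1 HC1'].
      pose proof (corr_same_scale _ _ _ _ D m HC1' (HD t0 Ht0) (HD t Ht) ltac:(lra)) as HC2.
      pose proof (corr_comp _ _ _ _ _ _ _ HC1 HC2) as HC3.
      eexists. eexists. split; [|exact HC3].
      rewrite Rabs_minus_sym.
      assert (0 <= Rabs (t - t0)) by apply Rabs_pos.
      assert (m * K * Rabs (t - t0) <= m * K * da) by (apply Rmult_le_compat_l; nra).
      nra. }
    unfold lamf in *. apply Rabs_def1; unfold n, m, e' in *; lra.
Qed.
Lemma path_family (G : MetricSpace) r s0 (W : R -> MetricSpace) D K lmin lmax :
  (forall g g' : G, dist g g' <= s0) -> s0 < r -> 0 <= D -> 0 <= K ->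
  (forall t, 0 <= t <= 2 -> forall x y : W t, dist x y <= D) ->
  (forall t t', 0 <= t <= 2 -> 0 <= t' <= 2 ->
     exists C, Corr (W t) (W t') C (K * Rabs (t - t'))) ->
  0 < lmin -> lmin <= lmax ->
  (forall t, 0 <= t <= 2 -> below G r (scale lmin (W t))) ->
  (forall t, 0 <= t <= 2 -> ~ below G r (scale lmax (W t))) ->
  (forall t, 0 <= t <= 2 -> lmin <= lamf G r W lmin lmax t <= lmax /\
      in_sphere G r (scale (lamf G r W lmin lmax t) (W t))) /\
  GH_continuous_on 0 2 (fun t => scale (lamf G r W lmin lmax t) (W t)).
Proof.
  intros Hs0 Hr HD0 HK0 HD HK Hmin Hle Hbmin Hbmax.
  assert (Hsp : forall t, 0 <= t <= 2 -> lmin <= lamf G r W lmin lmax t <= lmax /\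
      in_sphere G r (scale (lamf G r W lmin lmax t) (W t))).
  { intros t Ht. pose proof (lub_sphere G r s0 (W t) D lmin lmax Hs0 Hr HD0 (HD t Ht) Hmin Hle
       (Hbmin t Ht) (Hbmax t Ht)) as [_ [H1 H2]]. split; [exact H1|exact H2]. }
  split; auto.
  intros t0 Ht0 eps Heps.
  set (e1 := eps / (D + 1)).
  assert (He1 : 0 < e1) by (unfold e1; apply Rdiv_lt_0_compat; lra).
  assert (He1D : e1 * D < eps).
  { assert (e1 * (D + 1) = eps) by (unfold e1; field; lra). nra. }
  destruct (lam_cont G r s0 W D K lmin lmax Hs0 Hr HD0 HK0 HD HK Hmin Hle Hbmin Hbmax
     t0 Ht0 e1 He1) as [d1 [Hd1 Hc1]].
  set (d2 := eps / (2 * lmax * K + 1)).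
  assert (Hd2 : 0 < d2) by (unfold d2; apply Rdiv_lt_0_compat; nra).
  assert (Hd2b : 2 * lmax * K * d2 < eps).
  { unfold d2. apply (Rmult_lt_reg_r (2 * lmax * K + 1)); [nra|]. field_simplify; nra. }
  exists (Rmin d1 d2). split; [apply Rmin_pos; auto|].
  intros t Ht Hdt.
  assert (Hdt1 : Rabs (t - t0) < d1) by (pose proof (Rmin_l d1 d2); lra).
  assert (Hdt2 : Rabs (t - t0) < d2) by (pose proof (Rmin_r d1 d2); lra).
  pose proof (Hc1 t Ht Hdt1) as Hl.
  destruct (Hsp t Ht) as [[Hb1 Hb2] _]. destruct (Hsp t0 Ht0) as [[Hb3 Hb4] _].
  set (lt := lamf G r W lmin lmax t) in *. set (l0 := lamf G r W lmin lmax t0) in *.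
  destruct (HK t0 t Ht0 Ht) as [C HC].
  set (d' := (Rabs (l0 - lt) * D + 2 * Rmax l0 lt * (K * Rabs (t0 - t))) / 2).
  pose proof (corr_scale _ _ _ _ D l0 lt d' HC (HD t0 Ht0) (HD t Ht) ltac:(lra) ltac:(lra)
    ltac:(unfold d'; lra)) as HC2.
  assert (Hd' : d' < eps).
  { unfold d'. rewrite Rabs_minus_sym in Hl. rewrite (Rabs_minus_sym t0 t).
    assert (Rabs (l0 - lt) * D <= e1 * D) by (apply Rmult_le_compat_r; lra).
    assert (Rmax l0 lt <= lmax) by (apply Rmax_lub; lra).
    assert (0 <= Rabs (t - t0)) by apply Rabs_pos.
    assert (0 <= Rmax l0 lt) by (pose proof (Rmax_l l0 lt); lra).
    assert (Rmax l0 lt * (K * Rabs (t - t0)) <= lmax * (K * d2)).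
    { apply Rmult_le_compat; [lra|apply Rmult_le_pos; lra|lra|apply Rmult_le_compat_l; lra]. }
    nra. }
  exists ((d' + eps) / 2). split; [lra|].
  apply (corr_adm _ _ _ d' _ HC2). lra.
Qed.
Lemma pd_refl (X Y : MetricSpace) a b (u : X * Y) :
  Rmax (posr a * dist (fst u) (fst u)) (posr b * dist (snd u) (snd u)) = 0.
Proof. rewrite !dist_refl, !Rmult_0_r. unfold Rmax; destruct (Rle_dec 0 0); lra. Qed.

Lemma pd_sep (X Y : MetricSpace) a b (u v : X * Y) :
  Rmax (posr a * dist (fst u) (fst v)) (posr b * dist (snd u) (snd v)) = 0 -> u = v.
Proof.
  intros E. destruct u as [x y], v as [x' y']; simpl in *.
  pose proof (posr_pos a). pose proof (posr_pos b).
  pose proof (dist_nonneg X x x'). pose proof (dist_nonneg Y y y').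
  pose proof (Rmax_l (posr a * dist x x') (posr b * dist y y')).
  pose proof (Rmax_r (posr a * dist x x') (posr b * dist y y')).
  assert (dist x x' = 0) by nra. assert (dist y y' = 0) by nra.
  f_equal; apply dist_sep; auto.
Qed.

Lemma pd_sym (X Y : MetricSpace) a b (u v : X * Y) :
  Rmax (posr a * dist (fst u) (fst v)) (posr b * dist (snd u) (snd v)) =
  Rmax (posr a * dist (fst v) (fst u)) (posr b * dist (snd v) (snd u)).
Proof. rewrite (dist_sym X (fst u)), (dist_sym Y (snd u)). auto. Qed.

Lemma pd_tri (X Y : MetricSpace) a b (u v w : X * Y) :
  Rmax (posr a * dist (fst u) (fst w)) (posr b * dist (snd u) (snd w)) <=
  Rmax (posr a * dist (fst u) (fst v)) (posr b * dist (snd u) (snd v)) +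
  Rmax (posr a * dist (fst v) (fst w)) (posr b * dist (snd v) (snd w)).
Proof.
  pose proof (posr_pos a). pose proof (posr_pos b).
  pose proof (dist_tri X (fst u) (fst v) (fst w)). pose proof (dist_tri Y (snd u) (snd v) (snd w)).
  pose proof (Rmax_l (posr a * dist (fst u) (fst v)) (posr b * dist (snd u) (snd v))).
  pose proof (Rmax_r (posr a * dist (fst u) (fst v)) (posr b * dist (snd u) (snd v))).
  pose proof (Rmax_l (posr a * dist (fst v) (fst w)) (posr b * dist (snd v) (snd w))).
  pose proof (Rmax_r (posr a * dist (fst v) (fst w)) (posr b * dist (snd v) (snd w))).
  apply Rmax_lub; nra.
Qed.

Definition prodsp (X Y : MetricSpace) (a b : R) : MetricSpace :=
  {| carrier := (X * Y)%type;
     dist := fun u v => Rmax (posr a * dist (fst u) (fst v)) (posr b * dist (snd u) (snd v));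
     pt := (pt X, pt Y);
     dist_refl := pd_refl X Y a b; dist_sep := pd_sep X Y a b;
     dist_sym := pd_sym X Y a b; dist_tri := pd_tri X Y a b |}.

Lemma prod_dist (X Y : MetricSpace) a b (u v : X * Y) : 0 < a -> 0 < b ->
  @dist (prodsp X Y a b) u v = Rmax (a * dist (fst u) (fst v)) (b * dist (snd u) (snd v)).
Proof. intros. simpl. rewrite !posr_eq; auto. Qed.

Definition Wfam (X Y : MetricSpace) (t : R) : MetricSpace :=
  if Rle_dec t 0 then X else if Rle_dec 2 t then Y
  else prodsp X Y (Rmin 1 (2 - t)) (Rmin 1 t).

Lemma Wfam_cases X Y t : 0 <= t <= 2 ->
  (t = 0 /\ Wfam X Y t = X) \/ (t = 2 /\ Wfam X Y t = Y) \/
  (0 < t < 2 /\ Wfam X Y t = prodsp X Y (Rmin 1 (2 - t)) (Rmin 1 t)).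
Proof.
  intros Ht. unfold Wfam. destruct (Rle_dec t 0); [left; split; auto; lra|].
  destruct (Rle_dec 2 t); [right; left; split; auto; lra|]. right; right; split; auto; lra.
Qed.

Lemma Rmin1_lip u v : Rabs (Rmin 1 u - Rmin 1 v) <= Rabs (u - v).
Proof. unfold Rmin. destruct (Rle_dec 1 u), (Rle_dec 1 v); split_Rabs; lra. Qed.

Lemma below_small (G : MetricSpace) r s0 (M : MetricSpace) D :
  (forall g g' : G, dist g g' <= s0) -> s0 < r -> 0 <= D ->
  (forall x y : M, dist x y <= D) -> below G r (scale (r / (D + 1)) M).
Proof.
  intros Hs0 Hr HD0 HD.
  assert (Hs00 : 0 <= s0) by (pose proof (Hs0 (pt G) (pt G)); rewrite dist_refl in H; lra).
  set (l := r / (D + 1)).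
  assert (Hl : 0 < l) by (unfold l; apply Rdiv_lt_0_compat; lra).
  assert (HlD : l * D < r).
  { assert (l * (D + 1) = r) by (unfold l; field; lra). nra. }
  exists (fun _ _ => True), (Rmax (s0 / 2) (l * D / 2)). split.
  - apply Rmax_lub_lt; lra.
  - split; [|split]; [intros p; exists (pt M); auto|intros q; exists (pt G); auto|].
    intros g x g' x' _ _. rewrite scale_dist by lra.
    pose proof (Rmax_l (s0 / 2) (l * D / 2)). pose proof (Rmax_r (s0 / 2) (l * D / 2)).
    pose proof (HD x x'). pose proof (dist_nonneg M x x'). pose proof (Hs0 g g').
    pose proof (dist_nonneg G g g').
    assert (l * @dist M x x' <= l * D) by (apply Rmult_le_compat_l; lra). split; nra.
Qed.

Lemma notbelow_large (G : MetricSpace) r s0 (M : MetricSpace) l :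
  (forall g g' : G, dist g g' <= s0) -> 0 < r -> 0 < l -> s0 + 2 * r <= l * r ->
  (exists x y : M, r <= dist x y) -> ~ below G r (scale l M).
Proof.
  intros Hs0 Hr Hl Hlr [x [y Hxy]] [C [s [Hs [H1 [H2 H3]]]]].
  destruct (H2 x) as [g Hg]. destruct (H2 y) as [g' Hg'].
  destruct (H3 _ _ _ _ Hg Hg') as [E _]. rewrite scale_dist in E by lra.
  pose proof (Hs0 g g'). assert (l * r <= l * dist x y) by (apply Rmult_le_compat_l; lra).
  lra.
Qed.

Lemma sphere_bounded (G : MetricSpace) r s0 (M : MetricSpace) :
  (forall g g' : G, dist g g' <= s0) -> in_sphere G r M ->
  forall x y : M, dist x y <= s0 + 2 * (r + 1).
Proof.
  intros Hs0 HM. apply sphere_to in HM as [_ Hn].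
  destruct (Hn (r + 1) ltac:(lra)) as [C [H1 [H2 H3]]]. intros x y.
  destruct (H2 x) as [g Hg]. destruct (H2 y) as [g' Hg'].
  destruct (H3 _ _ _ _ Hg Hg') as [E _]. pose proof (Hs0 g g'). lra.
Qed.

Lemma sphere_far (G : MetricSpace) r s0 (M : MetricSpace) :
  (forall g g' : G, dist g g' <= s0) -> s0 < r -> in_sphere G r M ->
  exists x y : M, r <= dist x y.
Proof.
  intros Hs0 Hr HM. apply sphere_to in HM as [Hb _].
  apply NNPP. intros Hn. apply Hb.
  assert (Hs00 : 0 <= s0) by (pose proof (Hs0 (pt G) (pt G)); rewrite dist_refl in H; lra).
  assert (HA : forall x y : M, dist x y <= r).
  { intros x y. destruct (Rle_or_lt (dist x y) r) as [h|h]; auto. exfalso. apply Hn.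
    exists x, y. lra. }
  exists (fun _ _ => True), (Rmax (s0 / 2) (r / 2) + 0 ). split.
  - rewrite Rplus_0_r. apply Rmax_lub_lt; lra.
  - split; [|split]; [intros p; exists (pt M); auto|intros q; exists (pt G); auto|].
    intros g x g' x' _ _. rewrite Rplus_0_r.
    pose proof (Rmax_l (s0 / 2) (r / 2)). pose proof (Rmax_r (s0 / 2) (r / 2)).
    pose proof (HA x x'). pose proof (dist_nonneg M x x'). pose proof (Hs0 g g').
    pose proof (dist_nonneg G g g'). split; lra.
Qed.
Lemma Rmin_pos1 t : 0 < t -> 0 < Rmin 1 t.
Proof. intros. unfold Rmin; destruct (Rle_dec 1 t); lra. Qed.

Lemma Rmin_1_le u : Rmin 1 u <= 1.
Proof. apply Rmin_l. Qed.

Lemma corr_X_P (X Y : MetricSpace) DX DY t : 0 < t < 2 ->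
  (forall x y : X, dist x y <= DX) -> (forall x y : Y, dist x y <= DY) ->
  Corr X (prodsp X Y (Rmin 1 (2 - t)) (Rmin 1 t)) (fun x u => fst u = x)
    ((DX + DY) * Rabs (0 - t)).
Proof.
  intros Ht HX HY. split; [|split].
  - intros x. exists (x, pt Y). auto.
  - intros u. exists (fst u). auto.
  - intros x u x' u' <- <-. rewrite prod_dist by (apply Rmin_pos1; lra).
    replace (0 - t) with (- t) by ring. rewrite Rabs_Ropp, Rabs_pos_eq by lra.
    set (a := Rmin 1 (2 - t)). set (b := Rmin 1 t).
    assert (Ha1 : a <= 1) by apply Rmin_l. assert (Hb1 : b <= t) by apply Rmin_r.
    assert (Ha2 : 1 - t <= a) by (unfold a, Rmin; destruct (Rle_dec 1 (2 - t)); lra).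
    assert (Hb0 : 0 < b) by (apply Rmin_pos1; lra).
    pose proof (dist_nonneg X (fst u) (fst u')). pose proof (dist_nonneg Y (snd u) (snd u')).
    pose proof (HX (fst u) (fst u')). pose proof (HY (snd u) (snd u')).
    pose proof (Rmax_l (a * dist (fst u) (fst u')) (b * dist (snd u) (snd u'))).
    pose proof (Rmax_r (a * dist (fst u) (fst u')) (b * dist (snd u) (snd u'))).
    split.
    + apply Rmax_lub; nra.
    + nra.
Qed.

Lemma corr_Y_P (X Y : MetricSpace) DX DY t : 0 < t < 2 ->
  (forall x y : X, dist x y <= DX) -> (forall x y : Y, dist x y <= DY) ->
  Corr Y (prodsp X Y (Rmin 1 (2 - t)) (Rmin 1 t)) (fun y u => snd u = y)
    ((DX + DY) * Rabs (2 - t)).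
Proof.
  intros Ht HX HY. split; [|split].
  - intros y. exists (pt X, y). auto.
  - intros u. exists (snd u). auto.
  - intros y u y' u' <- <-. rewrite prod_dist by (apply Rmin_pos1; lra).
    rewrite Rabs_pos_eq by lra.
    set (a := Rmin 1 (2 - t)). set (b := Rmin 1 t).
    assert (Hb1 : b <= 1) by apply Rmin_l. assert (Ha1 : a <= 2 - t) by apply Rmin_r.
    assert (Hb2 : 1 - (2 - t) <= b) by (unfold b, Rmin; destruct (Rle_dec 1 t); lra).
    assert (Ha0 : 0 < a) by (apply Rmin_pos1; lra).
    pose proof (dist_nonneg X (fst u) (fst u')). pose proof (dist_nonneg Y (snd u) (snd u')).
    pose proof (HX (fst u) (fst u')). pose proof (HY (snd u) (snd u')).
    pose proof (Rmax_l (a * dist (fst u) (fst u')) (b * dist (snd u) (snd u'))).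
    pose proof (Rmax_r (a * dist (fst u) (fst u')) (b * dist (snd u) (snd u'))).
    split.
    + apply Rmax_lub; nra.
    + nra.
Qed.

Lemma corr_P_P (X Y : MetricSpace) DX DY t t' : 0 < t < 2 -> 0 < t' < 2 ->
  (forall x y : X, dist x y <= DX) -> (forall x y : Y, dist x y <= DY) ->
  Corr (prodsp X Y (Rmin 1 (2 - t)) (Rmin 1 t)) (prodsp X Y (Rmin 1 (2 - t')) (Rmin 1 t')) eq
    ((DX + DY) * Rabs (t - t')).
Proof.
  intros Ht Ht' HX HY. split; [|split]; [eauto|eauto|].
  intros u v u' v' <- <-. rewrite !prod_dist by (apply Rmin_pos1; lra).
  pose proof (Rmin1_lip (2 - t) (2 - t')) as La. pose proof (Rmin1_lip t t') as Lb.
  replace (2 - t - (2 - t')) with (- (t - t')) in La by ring. rewrite Rabs_Ropp in La.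
  set (a := Rmin 1 (2 - t)) in *. set (b := Rmin 1 t) in *.
  set (a' := Rmin 1 (2 - t')) in *. set (b' := Rmin 1 t') in *.
  set (dx := dist (fst u) (fst u')). set (dy := dist (snd u) (snd u')).
  assert (0 <= dx) by apply dist_nonneg. assert (0 <= dy) by apply dist_nonneg.
  assert (dx <= DX) by apply HX. assert (dy <= DY) by apply HY.
  set (h := Rabs (t - t')) in *. assert (0 <= h) by apply Rabs_pos.
  assert (A1 : a * dx <= a' * dx + h * DX).
  { assert ((a - a') * dx <= Rabs (a - a') * dx) by (apply Rmult_le_compat_r; [lra|apply Rle_abs]).
    assert (Rabs (a - a') * dx <= h * DX) by (apply Rmult_le_compat; auto; apply Rabs_pos). lra. }
  assert (A2 : a' * dx <= a * dx + h * DX).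
  { assert ((a' - a) * dx <= Rabs (a - a') * dx).
    { apply Rmult_le_compat_r; [lra|]. rewrite Rabs_minus_sym. apply Rle_abs. }
    assert (Rabs (a - a') * dx <= h * DX) by (apply Rmult_le_compat; auto; apply Rabs_pos). lra. }
  assert (B1 : b * dy <= b' * dy + h * DY).
  { assert ((b - b') * dy <= Rabs (b - b') * dy) by (apply Rmult_le_compat_r; [lra|apply Rle_abs]).
    assert (Rabs (b - b') * dy <= h * DY) by (apply Rmult_le_compat; auto; apply Rabs_pos). lra. }
  assert (B2 : b' * dy <= b * dy + h * DY).
  { assert ((b' - b) * dy <= Rabs (b - b') * dy).
    { apply Rmult_le_compat_r; [lra|]. rewrite Rabs_minus_sym. apply Rle_abs. }
    assert (Rabs (b - b') * dy <= h * DY) by (apply Rmult_le_compat; auto; apply Rabs_pos). lra. }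
  assert (0 <= h * DX) by (apply Rmult_le_pos; lra).
  assert (0 <= h * DY) by (apply Rmult_le_pos; lra).
  pose proof (Rmax_l (a * dx) (b * dy)). pose proof (Rmax_r (a * dx) (b * dy)).
  pose proof (Rmax_l (a' * dx) (b' * dy)). pose proof (Rmax_r (a' * dx) (b' * dy)).
  split; apply Rmax_lub; nra.
Qed.

Lemma corr_full (P Q : MetricSpace) DP DQ s :
  (forall x y : P, dist x y <= DP) -> (forall x y : Q, dist x y <= DQ) ->
  DP <= 2 * s -> DQ <= 2 * s -> Corr P Q (fun _ _ => True) s.
Proof.
  intros HP HQ H1 H2. split; [|split]; [intros p; exists (pt Q); auto|intros q; exists (pt P); auto|].
  intros p q p' q' _ _. pose proof (HP p p'). pose proof (HQ q q').
  pose proof (dist_nonneg P p p'). pose proof (dist_nonneg Q q q'). split; lra.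
Qed.

Lemma Wfam_corr (X Y : MetricSpace) DX DY :
  0 <= DX -> 0 <= DY ->
  (forall x y : X, dist x y <= DX) -> (forall x y : Y, dist x y <= DY) ->
  forall t t', 0 <= t <= 2 -> 0 <= t' <= 2 ->
  exists C, Corr (Wfam X Y t) (Wfam X Y t') C ((DX + DY) * Rabs (t - t')).
Proof.
  intros HX0 HY0 HX HY t t' Ht Ht'.
  assert (Hz : forall u, 0 <= (DX + DY) * Rabs u) by (intros; apply Rmult_le_pos; [lra|apply Rabs_pos]).
  destruct (Wfam_cases X Y t Ht) as [[-> E]|[[-> E]|[Hm E]]]; rewrite E;
  destruct (Wfam_cases X Y t' Ht') as [[-> E']|[[-> E']|[Hm' E']]]; rewrite E'.
  - eexists. eapply corr_mono; [apply corr_refl|apply Hz].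
  - eexists. assert (R02 : Rabs (0 - 2) = 2) by (rewrite Rabs_left; lra).
    apply (corr_full X Y DX DY); auto; rewrite R02; lra.
  - eexists. apply (corr_X_P X Y DX DY); auto.
  - eexists. assert (R02 : Rabs (2 - 0) = 2) by (rewrite Rabs_pos_eq; lra).
    apply (corr_full Y X DY DX); auto; rewrite R02; lra.
  - eexists. eapply corr_mono; [apply corr_refl|apply Hz].
  - eexists. apply (corr_Y_P X Y DX DY); auto.
  - eexists. rewrite Rabs_minus_sym. apply corr_sym. apply (corr_X_P X Y DX DY); auto.
  - eexists. rewrite Rabs_minus_sym. apply corr_sym. apply (corr_Y_P X Y DX DY); auto.
  - eexists. apply (corr_P_P X Y DX DY); auto.
Qed.

Lemma Wfam_bound (X Y : MetricSpace) DX DY :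
  0 <= DX -> 0 <= DY ->
  (forall x y : X, dist x y <= DX) -> (forall x y : Y, dist x y <= DY) ->
  forall t, 0 <= t <= 2 -> forall x y : Wfam X Y t, dist x y <= DX + DY.
Proof.
  intros HX0 HY0 HX HY t Ht.
  destruct (Wfam_cases X Y t Ht) as [[_ E]|[[_ E]|[Hm E]]]; rewrite E; intros u v.
  - pose proof (HX u v). lra.
  - pose proof (HY u v). lra.
  - rewrite prod_dist by (apply Rmin_pos1; lra).
    pose proof (Rmin_l 1 (2 - t)). pose proof (Rmin_l 1 t).
    pose proof (Rmin_pos1 (2 - t) ltac:(lra)). pose proof (Rmin_pos1 t ltac:(lra)).
    pose proof (HX (fst u) (fst v)). pose proof (HY (snd u) (snd v)).
    pose proof (dist_nonneg X (fst u) (fst v)). pose proof (dist_nonneg Y (snd u) (snd v)).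
    apply Rmax_lub; nra.
Qed.

Lemma Wfam_far (X Y : MetricSpace) r :
  (exists x y : X, r <= dist x y) -> (exists x y : Y, r <= dist x y) ->
  forall t, 0 <= t <= 2 -> exists u v : Wfam X Y t, r <= dist u v.
Proof.
  intros [x [x' Hx]] [y [y' Hy]] t Ht.
  destruct (Wfam_cases X Y t Ht) as [[_ E]|[[_ E]|[Hm E]]]; rewrite E.
  - eauto.
  - eauto.
  - destruct (Rle_or_lt t 1) as [h|h].
    + exists (x, pt Y), (x', pt Y). rewrite prod_dist by (apply Rmin_pos1; lra). simpl.
      replace (Rmin 1 (2 - t)) with 1 by (unfold Rmin; destruct (Rle_dec 1 (2 - t)); lra).
      pose proof (Rmax_l (1 * dist x x') (Rmin 1 t * dist (pt Y) (pt Y))). lra.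
    + exists (pt X, y), (pt X, y'). rewrite prod_dist by (apply Rmin_pos1; lra). simpl.
      replace (Rmin 1 t) with 1 by (unfold Rmin; destruct (Rle_dec 1 t); lra).
      pose proof (Rmax_r (Rmin 1 (2 - t) * dist (pt X) (pt X)) (1 * dist y y')). lra.
Qed.
Lemma Wfam0 X Y : Wfam X Y 0 = X.
Proof. unfold Wfam. destruct (Rle_dec 0 0); [reflexivity|exfalso; lra]. Qed.
Lemma Wfam2 X Y : Wfam X Y 2 = Y.
Proof. unfold Wfam. destruct (Rle_dec 2 0); [exfalso; lra|].
  destruct (Rle_dec 2 2); [reflexivity|exfalso; lra]. Qed.

Lemma corr_scale1 (M : MetricSpace) : Corr M (scale 1 M) eq 0.
Proof.
  split; [|split]; [eauto|eauto|]. intros p q p' q' <- <-.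
  rewrite scale_dist by lra. split; lra.
Qed.

Lemma isometric_scale1 (M : MetricSpace) : isometric (scale 1 M) M.
Proof.
  exists (fun x => x), (fun x => x). split; [|split]; auto.
  intros x x'. rewrite scale_dist by lra. ring.
Qed.

Lemma endpoint (G : MetricSpace) r s0 (M : MetricSpace) l :
  (forall g g' : G, dist g g' <= s0) -> s0 < r -> 0 < l ->
  in_sphere G r M -> in_sphere G r (scale l M) -> isometric (scale l M) M.
Proof.
  intros Hs0 Hr Hl HM HlM.
  assert (H1 : in_sphere G r (scale 1 M)) by exact (sphere_corr0 G r M (scale 1 M) eq (corr_scale1 M) HM).
  pose proof (sphere_scale_unique G r s0 M l 1 Hs0 Hr Hl ltac:(lra) HlM H1) as E.
  rewrite E. apply isometric_scale1.
Qed.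

Theorem theorem2 (G : MetricSpace) (r : R) :
  ms_bounded G -> diam_lt G r ->
  (forall Y : MetricSpace, in_sphere G r Y -> ms_bounded Y) /\
  (forall X Y : MetricSpace, in_sphere G r X -> in_sphere G r Y ->
     exists (a b : R) (gamma : R -> MetricSpace),
       a <= b /\
       GH_continuous_on a b gamma /\
       isometric (gamma a) X /\ isometric (gamma b) Y /\
       (forall t, a <= t <= b -> in_sphere G r (gamma t))).
Proof.
  intros _ [s0 [Hr Hs0]].
  assert (Hs00 : 0 <= s0) by (pose proof (Hs0 (pt G) (pt G)); rewrite dist_refl in H; lra).
  split.
  - intros M HM. exists (s0 + 2 * (r + 1)). exact (sphere_bounded G r s0 M Hs0 HM).
  - intros X Y HX HY.
    set (DX := s0 + 2 * (r + 1)).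
    assert (HDX : 0 <= DX) by (unfold DX; lra).
    pose proof (sphere_bounded G r s0 X Hs0 HX) as HXb.
    pose proof (sphere_bounded G r s0 Y Hs0 HY) as HYb.
    fold DX in HXb, HYb.
    set (D := DX + DX).
    assert (HD0 : 0 <= D) by (unfold D; lra).
    set (lmin := r / (D + 1)).
    assert (Hlmin : 0 < lmin) by (unfold lmin; apply Rdiv_lt_0_compat; lra).
    set (lmax := (s0 + 2 * r) / r + lmin).
    assert (Hlmax : s0 + 2 * r <= lmax * r).
    { unfold lmax. assert ((s0 + 2 * r) / r * r = s0 + 2 * r) by (field; lra). nra. }
    assert (Hle : lmin <= lmax).
    { unfold lmax. assert (0 <= (s0 + 2 * r) / r) by (apply Rmult_le_pos; [lra|];
        apply Rlt_le, Rinv_0_lt_compat; lra). lra. }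
    pose proof (Wfam_bound X Y DX DX HDX HDX HXb HYb) as HWb.
    pose proof (Wfam_corr X Y DX DX HDX HDX HXb HYb) as HWc.
    pose proof (Wfam_far X Y r (sphere_far G r s0 X Hs0 Hr HX) (sphere_far G r s0 Y Hs0 Hr HY)) as HWf.
    destruct (path_family G r s0 (Wfam X Y) D D lmin lmax Hs0 Hr HD0 HD0 HWb HWc Hlmin Hle)
      as [Hsp Hcont].
    + intros t Ht. apply (below_small G r s0 _ D Hs0 Hr HD0 (HWb t Ht)).
    + intros t Ht. apply (notbelow_large G r s0 _ lmax Hs0); auto; lra.
    + exists 0, 2, (fun t => scale (lamf G r (Wfam X Y) lmin lmax t) (Wfam X Y t)).
      split; [lra|split; [exact Hcont|split; [|split]]].
      * destruct (Hsp 0 ltac:(lra)) as [[Hb1 _] HS]. cbv beta.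
        set (l := lamf G r (Wfam X Y) lmin lmax 0) in *. clearbody l.
        rewrite Wfam0 in HS |- *. apply (endpoint G r s0 X l Hs0 Hr); auto; lra.
      * destruct (Hsp 2 ltac:(lra)) as [[Hb1 _] HS]. cbv beta.
        set (l := lamf G r (Wfam X Y) lmin lmax 2) in *. clearbody l.
        rewrite Wfam2 in HS |- *. apply (endpoint G r s0 Y l Hs0 Hr); auto; lra.
      * intros t Ht. apply (Hsp t Ht).
Qed.
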